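(* Let $\Delta_1$ and $\Delta_2$ be finite simplicial complexes on disjoint vertex sets. Then the join $\Delta_1*\Delta_2=\{F\cup G : F\in\Delta_1,\ G\in\Delta_2\}$ (a simplicial complex on $V(\Delta_1)\cup V(\Delta_2)$) is sortable if and only if both $\Delta_1$ and $\Delta_2$ are sortable.
   Context: For a finite set $F\subset\mathbb{N}$ write $\mathbf{x}^F=\prod_{i\in F}x_i$. For finite sets $F,G\subset \mathbb{N}$ with $|F|=r$, $|G|=s$, write $\mathbf{x}^F\mathbf{x}^G=x_{i_1}x_{i_2}\cdots x_{i_{r+s}}$ with $i_1\le i_2\le\cdots\le i_{r+s}$ and define $\mathrm{sort}(F,G)=(F',G')$ where $F'=\{i_k: k \text{ odd}\}$ and $G'=\{i_k : k\text{ even}\}$. A finite simplicial complex $\Delta$ with $V(\Delta)\subset\mathbb{N}$ is sortable with respect to the given labeling if $\mathrm{sort}(F,G)\in\Delta\times\Delta$ for all $F,G\in\Delta$; a simplicial complex is sortable if it is sortable with respect to some labeling of its vertices by integers (distinct positive integers). *)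

(* Defs.v *)
From mathcomp Require Import all_boot.
Set Implicit Arguments. Unset Strict Implicit. Unset Printing Implicit Defensive.

Section Complexes.
Variable T : finType.

Definition simplicial_complex (D : {set {set T}}) : bool :=
  (set0 \in D) && [forall F in D, forall G : {set T}, (G \subset F) ==> (G \in D)].

Definition vertices (D : {set {set T}}) : {set T} := \bigcup_(F in D) F.

Definition join (D1 D2 : {set {set T}}) : {set {set T}} :=
  [set F :|: G | F in D1, G in D2].

Definition labels (f : T -> nat) (F : {set T}) : seq nat := [seq f x | x <- enum F].

(* x^F x^G = x_{i_1} ... x_{i_{r+s}} with i_1 <= ... <= i_{r+s} *)
Definition merged (f : T -> nat) (F G : {set T}) : seq nat :=
  sort leq (labels f F ++ labels f G).

(* F' = {i_k : k odd} (1-indexed, i.e. 0-indexed even positions),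
   G' = {i_k : k even} *)
Definition sortF (f : T -> nat) (F G : {set T}) : seq nat :=
  let m := merged f F G in [seq nth 0 m k | k <- iota 0 (size m) & ~~ odd k].
Definition sortG (f : T -> nat) (F G : {set T}) : seq nat :=
  let m := merged f F G in [seq nth 0 m k | k <- iota 0 (size m) & odd k].

Definition labeled_face (f : T -> nat) (D : {set {set T}}) (S : seq nat) : Prop :=
  exists2 H, H \in D & labels f H =i S.

Definition sortable_wrt (f : T -> nat) (D : {set {set T}}) : Prop :=
  forall F G, F \in D -> G \in D ->
    labeled_face f D (sortF f F G) /\ labeled_face f D (sortG f F G).

Definition sortable (D : {set {set T}}) : Prop :=
  exists f : T -> nat,
    [/\ {in vertices D &, injective f}, {in vertices D, forall x, 0 < f x}
      & sortable_wrt f D].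
End Complexes.

(* Main.v *)
Require Import Defs.
From mathcomp Require Import all_boot.
From mathcomp Require Import zify.
Set Implicit Arguments. Unset Strict Implicit. Unset Printing Implicit Defensive.

Definition sel (P : pred nat) (m : seq nat) := [seq nth 0 m k | k <- iota 0 (size m) & P k].

Lemma selP P m x : reflect (exists2 k, (k < size m) && P k & x = nth 0 m k) (x \in sel P m).
Proof.
apply: (iffP mapP) => -[k Hk ->]; exists k => //.
  by move: Hk; rewrite mem_filter mem_iota add0n andbC.
by rewrite mem_filter mem_iota add0n andbC.
Qed.

Lemma sel_sub P m : {subset sel P m <= m}.
Proof. by move=> x /selP[k /andP[Hk _] ->]; apply: mem_nth. Qed.

Lemma sel_map P g m : sel P (map g m) =i map g (sel P m).
Proof.
move=> x; apply/selP/mapP => [[k]|[y /selP[k Hk ->] ->]].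
  rewrite size_map => Hk ->; exists (nth 0 m k); last by rewrite (nth_map 0) //; case/andP: Hk.
  by apply/selP; exists k.
by exists k; rewrite ?size_map // (nth_map 0) //; case/andP: Hk.
Qed.

Lemma sel_cat b a c :
  sel (fun k => odd k == b) (a ++ c) =i
  sel (fun k => odd k == b) a ++ sel (fun k => odd k == (b (+) odd (size a))) c.
Proof.
move=> x; rewrite mem_cat; apply/selP/orP.
  move=> [k /andP[Hk Hb] ->]; rewrite nth_cat.
  case: (ltnP k (size a)) => Hka.
    by left; apply/selP; exists k; rewrite ?Hka.
  right; apply/selP; exists (k - size a) => //.
  apply/andP; split; first by move: Hk; rewrite size_cat; lia.
  move/eqP: Hb => <-; rewrite oddB //; by case: (odd k); case: (odd (size a)).
case=> /selP[k /andP[Hk Hb] ->].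
  by exists k; rewrite ?nth_cat ?Hk // size_cat Hb andbT ltn_addr.
exists (size a + k); last by rewrite nth_cat ltnNge leq_addr /= addKn.
rewrite size_cat ltn_add2l Hk /= oddD (eqP Hb).
by case: b {Hb}; case: (odd (size a)).
Qed.

Lemma sortFE (T : finType) f (F G : {set T}) : sortF f F G = sel (fun k => odd k == false) (merged f F G).
Proof. by rewrite /sortF /sel; congr map; apply: eq_filter => k; case: (odd k). Qed.
Lemma sortGE (T : finType) f (F G : {set T}) : sortG f F G = sel (fun k => odd k == true) (merged f F G).
Proof. by rewrite /sortG /sel; congr map; apply: eq_filter => k; case: (odd k). Qed.
Section Main.
Variable T : finType.
Implicit Types D : {set {set T}}.

Lemma labelsP (f : T -> nat) (H : {set T}) y : reflect (exists2 x, x \in H & y = f x) (y \in labels f H).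
Proof. by apply: (iffP mapP) => -[x Hx ->]; exists x; rewrite ?mem_enum in Hx *. Qed.

Lemma face_vert D F : F \in D -> F \subset vertices D.
Proof. by move=> HF; apply: bigcup_sup. Qed.

Lemma joinP D1 D2 H :
  reflect (exists F1 F2, [/\ F1 \in D1, F2 \in D2 & H = F1 :|: F2]) (H \in join D1 D2).
Proof.
apply: (iffP imset2P) => [[F1 F2 h1 h2 ->]|[F1 [F2 [h1 h2 ->]]]]; first by exists F1, F2.
by exists F1 F2.
Qed.

Lemma join_sym D1 D2 : join D1 D2 = join D2 D1.
Proof.
apply/setP => H; apply/joinP/joinP => -[F1 [F2 [h1 h2 ->]]]; exists F2, F1; by rewrite setUC.
Qed.

Lemma vert_join D1 D2 : vertices (join D1 D2) \subset vertices D1 :|: vertices D2.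
Proof.
apply/subsetP => x /bigcupP[H /joinP[F1 [F2 [h1 h2 ->]]]]; rewrite !inE => /orP[] xF.
  by rewrite (subsetP (face_vert h1)).
by rewrite (subsetP (face_vert h2)) ?orbT.
Qed.

Lemma sort_uniq (s t : seq nat) : sorted leq t -> perm_eq s t -> sort leq s = t.
Proof.
move=> st pst; rewrite -(sorted_sort leq_trans st); apply/perm_sortP => //.
- exact: leq_total.
- exact: leq_trans.
- exact: anti_leq.
Qed.

Lemma restrict D1 D2 : set0 \in D2 -> [disjoint vertices D1 & vertices D2] ->
  sortable (join D1 D2) -> sortable D1.
Proof.
move=> e0 dis [f [inj pos srt]].
have sub: {subset D1 <= join D1 D2}.
  by move=> F HF; apply/joinP; exists F, set0; rewrite setU0.
have subV: vertices D1 \subset vertices (join D1 D2).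
  apply/subsetP => x /bigcupP[F HF xF]; apply/bigcupP; exists F => //; exact: sub.
exists f; split.
- move=> x y xV yV; apply: inj; exact: (subsetP subV).
- move=> x xV; apply: pos; exact: (subsetP subV).
move=> F G HF HG; have [s1 s2] := srt F G (sub _ HF) (sub _ HG).
have key: forall S, {subset S <= merged f F G} ->
    labeled_face f (join D1 D2) S -> labeled_face f D1 S.
  move=> S subS [H HH eqH]; case/joinP: (HH) => H1 [H2 [H1D H2D EH]].
  have H20: H2 = set0.
    apply/setP => x; rewrite in_set0; apply/negbTE/negP => xH2.
    have : f x \in S by rewrite -eqH; apply/labelsP; exists x; rewrite // EH inE xH2 orbT.
    have xV : x \in vertices D2 by apply: (subsetP (face_vert H2D)).
    have xJ : x \in vertices (join D1 D2).
      by apply/bigcupP; exists H => //; rewrite EH inE xH2 orbT.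
    move/subS; rewrite mem_sort mem_cat => /orP[] /labelsP[y yFG fxy].
    + have yV: y \in vertices D1 by apply: (subsetP (face_vert HF)).
      have exy : x = y by apply: inj; rewrite ?fxy // (subsetP subV).
      by move: dis; rewrite disjoint_subset => /subsetP /(_ y yV); rewrite inE -exy xV.
    + have yV: y \in vertices D1 by apply: (subsetP (face_vert HG)).
      have exy : x = y by apply: inj; rewrite ?fxy // (subsetP subV).
      by move: dis; rewrite disjoint_subset => /subsetP /(_ y yV); rewrite inE -exy xV.
  by exists H1 => //; rewrite EH H20 setU0 in eqH.
by split; apply: key => //; rewrite ?sortFE ?sortGE; apply: sel_sub.
Qed.
End Main.
Section Comb.
Variable T : finType.
Variables D1 D2 : {set {set T}}.
Hypothesis dis : [disjoint vertices D1 & vertices D2].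

Lemma combine : sortable D1 -> sortable D2 -> sortable (join D1 D2).
Proof.
move=> [f1 [inj1 pos1 s1]] [f2 [inj2 pos2 s2]].
set V1 := vertices D1; set V2 := vertices D2.
set N := \max_(x in V1) f1 x.
pose f x := if x \in V1 then f1 x else N + f2 x.
have notV1 : forall x, x \in V2 -> x \notin V1.
  move=> x xV2; apply/negP => xV1.
  by move: dis; rewrite disjoint_subset => /subsetP /(_ x xV1); rewrite inE xV2.
have lab1 : forall H, H \in D1 -> labels f H = labels f1 H.
  move=> H HD; rewrite /labels; apply/eq_in_map => x; rewrite mem_enum => xH.
  by rewrite /f (subsetP (face_vert HD) x xH).
have lab2 : forall H, H \in D2 -> labels f H = map (addn N) (labels f2 H).
  move=> H HD; rewrite /labels -map_comp; apply/eq_in_map => x; rewrite mem_enum => xH.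
  by rewrite /f (negbTE (notV1 x (subsetP (face_vert HD) x xH))).
have labU : forall H1 H2, H1 \in D1 -> H2 \in D2 ->
    perm_eq (labels f (H1 :|: H2)) (labels f H1 ++ labels f H2).
  move=> H1 H2 h1 h2; rewrite /labels -map_cat; apply: perm_map; apply: uniq_perm.
  - exact: enum_uniq.
  - rewrite cat_uniq !enum_uniq /= andbT; apply/hasPn => x; rewrite !mem_enum => x2.
    apply/negP => x1; have := notV1 x (subsetP (face_vert h2) x x2).
    by rewrite (subsetP (face_vert h1) x x1).
  - by move=> x; rewrite mem_cat !mem_enum inE.
have leN : forall x, x \in V1 -> f1 x <= N by move=> x xV; apply: leq_bigmax_cond.
exists f; split.
- move=> x y /(subsetP (vert_join _ _)) xV /(subsetP (vert_join _ _)) yV.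
  rewrite /f; move: xV yV; rewrite !inE.
  case xV1: (x \in V1); case yV1: (y \in V1) => /= xV yV.
  + by apply: inj1.
  + have := leN x xV1; have := pos2 y yV; lia.
  + have := leN y yV1; have := pos2 x xV; lia.
  + by move/addnI; apply: inj2.
- move=> x /(subsetP (vert_join _ _)); rewrite /f !inE.
  by case xV1: (x \in V1) => /= xV; [apply: pos1 | rewrite addn_gt0 pos2 ?orbT].
move=> F G /joinP[F1 [F2 [hF1 hF2 ->]]] /joinP[G1 [G2 [hG1 hG2 ->]]].
set m1 := merged f1 F1 G1; set m2 := merged f2 F2 G2.
have Em : merged f (F1 :|: F2) (G1 :|: G2) = m1 ++ map (addn N) m2.
  rewrite /merged; apply: sort_uniq.
    rewrite sorted_pairwise; last exact: leq_trans.
    rewrite pairwise_cat -!sorted_pairwise; try exact: leq_trans.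
    apply/and3P; split.
    + apply/allrelP => x y; rewrite mem_sort mem_cat => /orP[] /labelsP[z zF ->] /mapP[w _ ->].
      * by apply: leq_trans (leN z _) (leq_addr _ _); apply: (subsetP (face_vert hF1)).
      * by apply: leq_trans (leN z _) (leq_addr _ _); apply: (subsetP (face_vert hG1)).
    + exact: sort_sorted leq_total _.
    + apply: (homo_sorted (e := leq)); first by move=> x y; rewrite leq_add2l.
      exact: sort_sorted leq_total _.
  apply: perm_trans (perm_cat (labU _ _ hF1 hF2) (labU _ _ hG1 hG2)) _.
  rewrite perm_catACA; apply: perm_cat.
    by rewrite /m1 /merged perm_sym perm_sort lab1 // lab1.
  rewrite /m2 /merged lab2 // lab2 // -map_cat; apply: perm_map.
  by rewrite perm_sym perm_sort.
have fin : forall S S1 S2, labeled_face f1 D1 S1 -> labeled_face f2 D2 S2 ->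
    S =i S1 ++ map (addn N) S2 -> labeled_face f (join D1 D2) S.
  move=> S S1 S2 [H1 h1 e1] [H2 h2 e2] eS; exists (H1 :|: H2).
    by apply/joinP; exists H1, H2.
  move=> x; rewrite eS (perm_mem (labU _ _ h1 h2)) !mem_cat lab1 // lab2 // e1.
  by rewrite (eq_mem_map _ e2).
have E : forall b, sel (fun k => odd k == b) (merged f (F1 :|: F2) (G1 :|: G2)) =i
    sel (fun k => odd k == b) m1 ++
    map (addn N) (sel (fun k => odd k == b (+) odd (size m1)) m2).
  by move=> b x; rewrite Em sel_cat !mem_cat sel_map.
have [a1 b1] := s1 F1 G1 hF1 hG1; have [a2 b2] := s2 F2 G2 hF2 hG2.
split.
  rewrite sortFE; apply: fin (E false); first by rewrite -sortFE.
  by case: (odd (size m1)) => /=; [rewrite -sortGE | rewrite -sortFE].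
rewrite sortGE; apply: fin (E true); first by rewrite -sortGE.
by case: (odd (size m1)) => /=; [rewrite -sortFE | rewrite -sortGE].
Qed.
End Comb.

Theorem proposition1p4 (T : finType) (D1 D2 : {set {set T}}) :
  simplicial_complex D1 -> simplicial_complex D2 ->
  [disjoint vertices D1 & vertices D2] ->
  (sortable (join D1 D2) <-> sortable D1 /\ sortable D2).
Proof.
move=> /andP[e1 _] /andP[e2 _] dis; split.
  move=> sJ; split; first exact: restrict e2 dis sJ.
  by apply: (restrict e1); [rewrite disjoint_sym | rewrite join_sym].
by move=> [sa sb]; apply: combine.
Qed.
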